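(* Let $X_1,\dots,X_n$ be features and $Y$ a target that is not a.s. constant, $\mathcal{F}=\{1,\dots,n\}$, and $i\in\mathcal{F}$. If $\mathrm{FI}(i)=1$, then $\mathrm{Dep}(X_i,Y)=1$ and $\mathrm{FI}(j)=0$ for every $j\in\mathcal{F}\setminus\{i\}$ (equivalently, every other feature $j$ satisfies $\mathrm{Dep}(S\cup\{j\},Y)=\mathrm{Dep}(S,Y)$ for all $S\subseteq\mathcal{F}\setminus\{j\}$).
   Context: All random variables are discrete with finite support and defined on a common probability space. For discrete random variables (or random vectors) $X$ and $Y$, define $$\mathrm{UD}(X,Y):=\sum_x p_X(x)\sum_y \bigl|p_{Y\mid X=x}(y)-p_Y(y)\bigr|,$$ and, when $Y$ is not almost surely constant, $\mathrm{Dep}(X,Y):=\mathrm{UD}(X,Y)/\mathrm{UD}(Y,Y)$. Given features $X_1,\dots,X_n$ with index set $\mathcal{F}=\{1,\dots,n\}$ and $S\subseteq\mathcal{F}$, write $X_S=(X_i)_{i\in S}$ ($X_\emptyset$ constant) and $\mathrm{Dep}(S,Y):=\mathrm{Dep}(X_S,Y)$. The Berkelmans–Pries feature importance is $$\mathrm{FI}(i):=\sum_{S\subseteq\mathcal{F}\setminus\{i\}}\frac{|S|!\,(n-|S|-1)!}{n!}\bigl(\mathrm{Dep}(S\cup\{i\},Y)-\mathrm{Dep}(S,Y)\bigr).$$ *)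

(* Defs.v *)
From mathcomp Require Import all_boot all_order all_algebra.
Set Implicit Arguments. Unset Strict Implicit. Unset Printing Implicit Defensive.
Import Order.TTheory GRing.Theory Num.Theory.
Local Open Scope ring_scope.

Section Defs.
Variables (R : realFieldType) (Omega : finType) (P : Omega -> R).

Definition pr (E : pred Omega) : R := \sum_(w | E w) P w.

Definition is_prob : Prop := (forall w, 0 <= P w) /\ \sum_w P w = 1.

Definition pmf (A : eqType) (X : Omega -> A) (x : A) : R := pr (fun w => X w == x).

Definition cond_pmf (A B : eqType) (X : Omega -> A) (Y : Omega -> B) (x : A) (y : B) : R :=
  pr (fun w => (X w == x) && (Y w == y)) / pmf X x.

Definition UD (A B : finType) (X : Omega -> A) (Y : Omega -> B) : R :=
  \sum_(x : A) pmf X x * \sum_(y : B) `|cond_pmf X Y x y - pmf Y y|.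

Definition Dep (A B : finType) (X : Omega -> A) (Y : Omega -> B) : R :=
  UD X Y / UD Y Y.

Definition as_constant (B : eqType) (Y : Omega -> B) : Prop :=
  exists y, pr (fun w => Y w == y) = 1.

Variables (n : nat) (T TY : finType) (X : 'I_n -> Omega -> T) (Y : Omega -> TY).

(* the random vector X_S = (X_i)_{i in S}; coordinates outside S are None,
   so X_emptyset is constant *)
Definition XS (S : {set 'I_n}) : Omega -> {ffun 'I_n -> option T} :=
  fun w => [ffun i => if i \in S then Some (X i w) else None].

Definition DepS (S : {set 'I_n}) : R := Dep (XS S) Y.

Definition FI (i : 'I_n) : R :=
  \sum_(S : {set 'I_n} | i \notin S)
     ((#|S|`! * (n - #|S| - 1)`!)%:R / (n`!)%:R) * (DepS (i |: S) - DepS S).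

End Defs.

(* Main.v *)
Require Import Defs.
From mathcomp Require Import all_boot all_order all_algebra.
From mathcomp Require Import ring lra zify.
Set Implicit Arguments. Unset Strict Implicit.
Import Order.TTheory GRing.Theory Num.Theory.
Local Open Scope ring_scope.

Local Close Scope ring_scope.
Lemma wsum n (i : 'I_n) :
  \sum_(S : {set 'I_n} | i \notin S) #|S|`! * (n - #|S| - 1)`! = n`!.
Proof.
have cardS (S : {set 'I_n}) : #|S| < n.+1.
  by rewrite ltnS; apply: leq_trans (max_card _) _; rewrite card_ord.
rewrite (partition_big (fun S : {set 'I_n} => inord #|S| : 'I_n.+1) xpredT) //=.
rewrite (eq_bigr (fun k : 'I_n.+1 => 'C(n.-1, k) * (k`! * (n - k - 1)`!))); last first.
  move=> k _.
  rewrite (eq_bigr (fun _ => k`! * (n - k - 1)`!)); last first.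
    by move=> S /andP[_ /eqP <-]; rewrite inordK.
  transitivity (\sum_(S in [pred S : {set 'I_n} | (i \notin S) && (inord #|S| == k)]) k`! * (n - k - 1)`!); first by apply: eq_bigl.
  rewrite sum_nat_const; congr (_ * _).
  have -> : n.-1 = #|[set~ i]| by rewrite cardsC1 card_ord.
  rewrite -cards_draws; apply: eq_card => S.
  by rewrite !inE subsetC sub1set inE -val_eqE /= inordK.
rewrite big_ord_recr /= bin_small ?muln0 ?addn0; last by clear cardS; case: n i => [[]|].
rewrite (eq_bigr (fun _ => n.-1`!)); last first.
  move=> k _; rewrite -(bin_fact (_ : (k <= n.-1)%N)); last by have := ltn_ord k; lia.
  by congr (_ * (_ * _`!)); lia.
rewrite sum_nat_const card_ord; clear cardS; by case: n i => [[]|m].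
Qed.
Local Open Scope ring_scope.
Section Aux.
Variables (R : realFieldType) (Omega : finType) (P : Omega -> R).
Hypothesis HP : is_prob P.

Lemma fiber_sum (A : finType) (X : Omega -> A) (F : A -> Omega -> R) :
  \sum_x \sum_(w | X w == x) F x w = \sum_w F (X w) w.
Proof.
rewrite (exchange_big_dep xpredT) //=; apply: eq_bigr => w _.
by rewrite (big_pred1 (X w)) // => x; rewrite /= eq_sym.
Qed.

Lemma eq_pr (E F : pred Omega) : E =1 F -> pr P E = pr P F.
Proof. by move=> h; apply: eq_bigl. Qed.

Lemma pr_ge0 E : 0 <= pr P E.
Proof. by apply: sumr_ge0 => w _; case: HP. Qed.

Lemma pr_le (E F : pred Omega) : (forall w, E w -> F w) -> pr P E <= pr P F.
Proof.
move=> h; rewrite /pr [X in X <= _]big_mkcond [X in _ <= X]big_mkcond /=.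
apply: ler_sum => w _; case: HP => H0 _.
by case E0: (E w); [rewrite (h _ E0) | case: (F w)].
Qed.

Lemma pr_le1 E : pr P E <= 1.
Proof. case: HP => _ <-; by apply: (@pr_le E xpredT). Qed.

Lemma sum_pr (A : finType) (X : Omega -> A) (E : pred Omega) :
  \sum_x pr P (fun w => (X w == x) && E w) = pr P E.
Proof.
rewrite /pr; under eq_bigr do rewrite big_mkcondr.
by rewrite (fiber_sum X (fun _ w => if E w then P w else 0)) -big_mkcond.
Qed.

Definition joint (A B : finType) (X : Omega -> A) (Y : Omega -> B) x y :=
  pr P (fun w => (X w == x) && (Y w == y)).

Lemma term (A B : finType) (X : Omega -> A) (Y : Omega -> B) x y :
  pmf P X x * `|cond_pmf P X Y x y - pmf P Y y| =
  `|joint X Y x y - pmf P X x * pmf P Y y|.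
Proof.
rewrite /cond_pmf -/(joint X Y x y).
have hj : joint X Y x y <= pmf P X x by apply: pr_le => w /andP[].
case: (eqVneq (pmf P X x) 0) => H.
  have -> : joint X Y x y = 0 by apply/le_anti/andP; split; [rewrite -H | apply: pr_ge0].
  by rewrite H !mul0r subrr normr0.
have h : pmf P X x * (joint X Y x y / pmf P X x - pmf P Y y) =
  joint X Y x y - pmf P X x * pmf P Y y by field.
by rewrite -h normrM ger0_norm // pr_ge0.
Qed.

Lemma UD_eq (A B : finType) (X : Omega -> A) (Y : Omega -> B) :
  UD P X Y = \sum_x \sum_y `|joint X Y x y - pmf P X x * pmf P Y y|.
Proof.
by apply: eq_bigr => x _; rewrite mulr_sumr; apply: eq_bigr => y _; rewrite term.
Qed.

Definition tt (A B : finType) (X : Omega -> A) (Y : Omega -> B) x y :=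
  joint X Y x y * (1 - pmf P Y y) + pmf P Y y * (pmf P X x - joint X Y x y).

Lemma term_le (A B : finType) (X : Omega -> A) (Y : Omega -> B) x y :
  `|joint X Y x y - pmf P X x * pmf P Y y| <= tt X Y x y.
Proof.
rewrite /tt.
have hj : joint X Y x y <= pmf P X x by apply: pr_le => w /andP[].
have h0 := pr_ge0 (fun w => (X w == x) && (Y w == y)).
have q0 := pr_ge0 (fun w => Y w == y).
have q1 := pr_le1 (fun w => Y w == y).
rewrite -/(joint X Y x y) -/(pmf P Y y) in h0 q0 q1.
set a := joint X Y x y in hj h0 *; set b := pmf P X x in hj *; set q := pmf P Y y in q0 q1 *.
have e1 : 0 <= a * (1 - q) by apply: mulr_ge0; lra.
have e2 : 0 <= q * (b - a) by apply: mulr_ge0; lra.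
rewrite ler_norml; apply/andP; split; nra.
Qed.

Lemma sum_pmf (A : finType) (X : Omega -> A) : \sum_x pmf P X x = 1.
Proof.
case: HP => _ <-.
transitivity (pr P xpredT); last by [].
rewrite -(sum_pr X xpredT); apply: eq_bigr => x _; apply: eq_pr => w.
by rewrite /= andbT.
Qed.

Lemma sum_tt (A B : finType) (X : Omega -> A) (Y : Omega -> B) y :
  \sum_x tt X Y x y = 2%:R * (pmf P Y y * (1 - pmf P Y y)).
Proof.
rewrite big_split /= -mulr_suml -mulr_sumr sumrB sum_pmf.
rewrite /joint (sum_pr X (fun w => Y w == y)) -/(pmf P Y y).
ring.
Qed.

Lemma joint_YY (B : finType) (Y : Omega -> B) y' y :
  joint Y Y y' y = if y' == y then pmf P Y y else 0.
Proof.
rewrite /joint; case: eqVneq => [->|ne].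
  by apply: eq_pr => w; rewrite /= andbb.
rewrite (@eq_pr _ xpred0); first by rewrite /pr big_pred0_eq.
move=> w /=; case: eqVneq => // ->; rewrite /=; exact: negbTE.
Qed.

Lemma UD_YY (B : finType) (Y : Omega -> B) :
  UD P Y Y = \sum_y' \sum_y tt Y Y y' y.
Proof.
rewrite UD_eq; apply: eq_bigr => y' _; apply: eq_bigr => y _.
rewrite /tt !joint_YY.
have q0 := pr_ge0 (fun w => Y w == y).
have q1 := pr_le1 (fun w => Y w == y).
have q0' := pr_ge0 (fun w => Y w == y').
rewrite -/(pmf P Y y) in q0 q1; rewrite -/(pmf P Y y') in q0'.
case: eqVneq => [->|_].
  rewrite ger0_norm; first ring.
  have : 0 <= pmf P Y y * (1 - pmf P Y y) by apply: mulr_ge0; lra.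
  nra.
rewrite sub0r normrN ger0_norm ?mulr_ge0 //; ring.
Qed.

Lemma UD_ge0 (A B : finType) (X : Omega -> A) (Y : Omega -> B) : 0 <= UD P X Y.
Proof. by apply: sumr_ge0 => x _; apply: mulr_ge0; [exact: pr_ge0 | apply: sumr_ge0]. Qed.

Lemma UD_le (A B : finType) (X : Omega -> A) (Y : Omega -> B) : UD P X Y <= UD P Y Y.
Proof.
rewrite UD_eq UD_YY.
apply: (@le_trans _ _ (\sum_x \sum_y tt X Y x y)).
  by apply: ler_sum => x _; apply: ler_sum => y _; apply: term_le.
rewrite exchange_big [X in _ <= X]exchange_big /=.
by apply: ler_sum => y _; rewrite !sum_tt.
Qed.

Lemma Dep_ge0 (A B : finType) (X : Omega -> A) (Y : Omega -> B) : 0 <= Dep P X Y.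
Proof. by apply: divr_ge0; apply: UD_ge0. Qed.

Lemma Dep_le1 (A B : finType) (X : Omega -> A) (Y : Omega -> B) : Dep P X Y <= 1.
Proof.
rewrite /Dep; have := UD_ge0 Y Y; rewrite le_eqVlt => /orP[/eqP <-|h].
  by rewrite invr0 mulr0.
by rewrite ler_pdivrMr // mul1r UD_le.
Qed.

Lemma pmf_weight (A : finType) (X : Omega -> A) (G : A -> R) :
  \sum_x pmf P X x * G x = \sum_w P w * G (X w).
Proof.
rewrite -(fiber_sum X (fun x w => P w * G x)); apply: eq_bigr => x _.
by rewrite /pmf /pr mulr_suml.
Qed.

Lemma UD_inj (A C B : finType) (X : Omega -> A) (f : A -> C) (Y : Omega -> B) :
  injective f -> UD P (fun w => f (X w)) Y = UD P X Y.
Proof.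
move=> fi; rewrite /UD.
rewrite (pmf_weight (fun w => f (X w)) (fun c => \sum_y `|cond_pmf P (fun w => f (X w)) Y c y - pmf P Y y|)).
rewrite (pmf_weight X (fun c => \sum_y `|cond_pmf P X Y c y - pmf P Y y|)).
apply: eq_bigr => w _; congr (_ * _); apply: eq_bigr => y _.
rewrite /cond_pmf /pmf; congr (`|_ / _ - _|); apply: eq_pr => v /=; by rewrite inj_eq.
Qed.

Lemma UD_ext (A B : finType) (X X' : Omega -> A) (Y : Omega -> B) :
  X =1 X' -> UD P X Y = UD P X' Y.
Proof.
move=> h; rewrite /UD /cond_pmf /pmf; apply: eq_bigr => x _.
have e : forall E : pred Omega, pr P (fun w => (X w == x) && E w) = pr P (fun w => (X' w == x) && E w).
  by move=> E; apply: eq_pr => w /=; rewrite h.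
have e1 := e xpredT; rewrite /= in e1.
have -> : pr P (fun w => X w == x) = pr P (fun w => X' w == x) by apply: eq_pr => w; rewrite /= h.
by congr (_ * _); apply: eq_bigr => y _; rewrite (e (fun w => Y w == y)).
Qed.

End Aux.

Theorem mainTheorem9 (R : realFieldType) (Omega : finType) (P : Omega -> R)
  (n : nat) (T TY : finType) (X : 'I_n -> Omega -> T) (Y : Omega -> TY)
  (i : 'I_n) :
  is_prob P ->
  ~ as_constant P Y ->
  FI P X Y i = 1 ->
  Dep P (X i) Y = 1 /\ (forall j : 'I_n, j != i -> FI P X Y j = 0).
Proof.
move=> HP _ HFI.
set w := fun S : {set 'I_n} => ((#|S|`! * (n - #|S| - 1)`!)%:R / (n`!)%:R : R).
have HW : \sum_(S : {set 'I_n} | i \notin S) w S = 1.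
  rewrite /w -mulr_suml -natr_sum wsum divff //.
  by rewrite pnatr_eq0 -lt0n fact_gt0.
have wpos (S : {set 'I_n}) : 0 < w S.
  by rewrite /w; apply: divr_gt0; rewrite ltr0n ?muln_gt0 ?fact_gt0.
have D0 (S : {set 'I_n}) := Dep_ge0 HP (XS X S) Y.
have D1 (S : {set 'I_n}) := Dep_le1 HP (XS X S) Y.
have H0 : \sum_(S : {set 'I_n} | i \notin S) w S * (1 - (DepS P X Y (i |: S) - DepS P X Y S)) = 0.
  under eq_bigr do rewrite mulrBr mulr1.
  by rewrite sumrB HW -HFI subrr.
have nn (T0 : {set 'I_n}) : i \notin T0 ->
    0 <= w T0 * (1 - (DepS P X Y (i |: T0) - DepS P X Y T0)).
  move=> hT0; apply: mulr_ge0; first exact: ltW.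
  have h1 := D0 (i |: T0); have h2 := D1 (i |: T0); have h3 := D0 T0; have h4 := D1 T0.
  rewrite /DepS in h1 h2 h3 h4 *; lra.
have key0 (S : {set 'I_n}) : i \notin S -> DepS P X Y (i |: S) = 1 /\ DepS P X Y S = 0.
  move=> hS.
  have := psumr_eq0P nn H0 hS.
  have h1 := D0 (i |: S); have h2 := D1 (i |: S); have h3 := D0 S; have h4 := D1 S.
  rewrite /DepS in h1 h2 h3 h4 *.
  move/eqP; rewrite mulf_eq0 gt_eqF //= subr_eq0 => /eqP e.
  split; lra.
have key (S : {set 'I_n}) : DepS P X Y S = if i \in S then 1 else 0.
  case: ifP => hi.
    by rewrite -(setD1K hi); case: (key0 (S :\ i)); rewrite ?setD11.
  by case: (key0 S) => //; rewrite hi.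
split.
  have := key [set i]; rewrite set11 /DepS /Dep => <-.
  congr (_ / _).
  pose f := fun t : T => ([ffun k => if k \in [set i] then Some t else None] : {ffun 'I_n -> option T}).
  have fi : injective f.
    move=> a b e; have := congr1 (fun g : {ffun 'I_n -> option T} => g i) e; rewrite /f /= !ffunE set11; by case.
  rewrite -(@UD_inj _ _ P _ _ _ (X i) f Y fi); apply: UD_ext => v.
  apply/ffunP => k; rewrite /XS /f !ffunE; case: ifP => // /set1P -> //.
move=> j ji; rewrite /FI; apply: big1 => S hS.
have ij : (i == j) = false by rewrite eq_sym; exact: negbTE.
by rewrite !key in_setU1 ij /= subrr mulr0.
Qed.
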